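(* Let $d$ be a nonnegative integer and let $H$ be a multigraph of even order with $\Delta(H) \le d+1$, having exactly $r$ vertices of degree $d+1$, and with $d+1 < \Gamma(H) \le d+2$. Let $S \subseteq V(H)$ with $|S|$ odd, $|S|\ge 3$, such that $\langle S\rangle$ is $(d+1)$-overfull in $H$ and $\operatorname{sl}(\langle S\rangle, d+1)$ is minimum among all $(d+1)$-overfull induced odd-order subgraphs of $H$. Then $\Delta(H_S)\le d+1$, $\Gamma(H_S)\le d+2$, and $H_S$ has at most $r$ vertices of degree $d+1$; similarly $\Delta(H_{S^c})\le d+1$, $\Gamma(H_{S^c})\le d+2$, and $H_{S^c}$ has at most $r$ vertices of degree $d+1$, where $S^c=V(H)\setminus S$.
   Context: Multigraphs are finite and loopless, multiple edges allowed. For $S \subseteq V(H)$, $\langle S\rangle$ is the induced subgraph. For a multigraph $K$ of odd order $n(K)\ge 3$ with $e(K)$ edges, $t(K) = 2e(K)/(n(K)-1)$; $K$ is $k$-overfull if $t(K)>k$. The $k$-slack is $\operatorname{sl}(K,k) = (k+1)(n(K)-1)/2 - e(K)$. $\Gamma(H) = \max\{t(\langle R\rangle) : R\subseteq V(H), |R| \text{ odd}, |R|\ge 3\}$ (statements about $\Gamma$ of a multigraph with no such $R$ are vacuous). Shrinking: for a nonempty proper subset $S$ of $V(H)$, $H_S$ has vertex set $(V(H)\setminus S)\cup\{s\}$ for a new vertex $s$; its edges are the edges of $H - S$ together with, for each $u \notin S$, exactly as many edges $us$ as there are edges of $H$ joining $u$ to vertices of $S$. *)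

(* Defs.v *)
From mathcomp Require Import all_boot all_order all_algebra.
Set Implicit Arguments. Unset Strict Implicit. Unset Printing Implicit Defensive.
Import Order.TTheory GRing.Theory Num.Theory.

(* A multigraph H is given by a finite vertex set V : {set T} inside a finType T
   and an edge-multiplicity function m : T -> T -> nat (m u v = number of edges
   joining u and v).  Only the values of m on V matter. *)

Definition is_multigraph (T : finType) (m : T -> T -> nat) : Prop :=
  (forall u v, m u v = m v u) /\ (forall v, m v v = 0%N).

Definition deg (T : finType) (V : {set T}) (m : T -> T -> nat) (v : T) : nat :=
  (\sum_(u in V) m v u)%N.

Definition maxdeg_le (T : finType) (V : {set T}) (m : T -> T -> nat) (k : nat) : Prop :=
  forall v, v \in V -> (deg V m v <= k)%N.

Definition num_deg (T : finType) (V : {set T}) (m : T -> T -> nat) (k : nat) : nat :=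
  #|[set v in V | deg V m v == k]|.

Definition nedges (T : finType) (m : T -> T -> nat) (R : {set T}) : nat :=
  (\sum_(u in R) \sum_(v in R) m u v)./2.

Definition tval (T : finType) (m : T -> T -> nat) (R : {set T}) : rat :=
  ((2 * nedges m R)%:R / (#|R|.-1)%:R)%R.

Definition overfull (T : finType) (m : T -> T -> nat) (R : {set T}) (k : nat) : Prop :=
  (k%:R < tval m R)%R.

Definition slack (T : finType) (m : T -> T -> nat) (R : {set T}) (k : nat) : rat :=
  (((k.+1 * #|R|.-1)%:R / 2%:R) - (nedges m R)%:R)%R.

Definition odd_sub (T : finType) (V : {set T}) (R : {set T}) : bool :=
  [&& R \subset V, odd #|R| & (3 <= #|R|)%N].

(* Gamma(H) = max t(<R>) over odd R with |R| >= 3 (0 if there is no such R;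
   all t values are >= 0, so this only affects the vacuous case) *)
Definition Gamma (T : finType) (V : {set T}) (m : T -> T -> nat) : rat :=
  (\big[Num.max/0]_(R : {set T} | odd_sub V R) tval m R)%R.

(* Shrinking S to a new vertex s : H_S lives on option T, with s = None. *)
Definition shrinkV (T : finType) (V S : {set T}) : {set option T} :=
  None |: [set Some x | x in V :\: S].

Definition shrinkm (T : finType) (m : T -> T -> nat) (S : {set T})
  (a b : option T) : nat :=
  match a, b with
  | Some u, Some v => m u v
  | Some u, None => (\sum_(x in S) m u x)%N
  | None, Some v => (\sum_(x in S) m v x)%N
  | None, None => 0%N
  end.

(* Main.v *)
Require Import Defs.
From mathcomp Require Import all_boot all_order all_algebra.
From mathcomp Require Import lra zify.
Import Order.TTheory GRing.Theory Num.Theory.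
Set Implicit Arguments. Unset Strict Implicit.

Section Comb.
Variables (T : finType) (m : T -> T -> nat).
Hypothesis msym : forall u v, m u v = m v u.
Hypothesis m0 : forall v, m v v = 0%N.

Lemma sumU (F : T -> nat) (B B' : {set T}) : [disjoint B & B'] ->
  (\sum_(v in B :|: B') F v = \sum_(v in B) F v + \sum_(v in B') F v)%N.
Proof. move=> d.
rewrite (big_setID B) /=.
rewrite (setIidPr (subsetUl _ _)) setDUl setDv set0U.
by rewrite (setDidPl _) // disjoint_sym.
Qed.

Definition CC (A B : {set T}) : nat := (\sum_(u in A) \sum_(v in B) m u v)%N.

Lemma CC_sym (A B : {set T}) : CC A B = CC B A.
Proof.
rewrite /CC exchange_big /=; apply: eq_bigr => u _; apply: eq_bigr => v _; exact: msym.
Qed.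

Lemma CC_U2 (A B B' : {set T}) : [disjoint B & B'] -> CC A (B :|: B') = (CC A B + CC A B')%N.
Proof.
move=> dB; rewrite /CC -big_split /=; apply: eq_bigr => u _.
exact: sumU.
Qed.

Lemma CC_U1 (A A' B : {set T}) : [disjoint A & A'] -> CC (A :|: A') B = (CC A B + CC A' B)%N.
Proof. by move=> dA; rewrite CC_sym CC_U2 // !(CC_sym B). Qed.

Lemma WU (A B : {set T}) : [disjoint A & B] ->
  CC (A :|: B) (A :|: B) = (CC A A + CC B B + 2 * CC A B)%N.
Proof.
move=> dA; rewrite CC_U1 // !CC_U2 // (CC_sym B A); lia.
Qed.

Lemma W1 x : CC [set x] [set x] = 0%N.
Proof. by rewrite /CC !big_set1 m0. Qed.

Lemma W_even R : ~~ odd (CC R R).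
Proof.
have [n] := ubnP #|R|; elim: n R => // n IH R.
case: (set_0Vmem R) => [->|[x xR]] Hc.
  by rewrite /CC big_set0.
have eR : R = [set x] :|: (R :\ x) by rewrite setD1K.
have dx : [disjoint [set x] & R :\ x].
  by rewrite disjoints1 !inE eqxx.
rewrite eR WU // W1 add0n oddD oddM /= addbF.
apply: IH; rewrite -ltnS; apply: leq_trans Hc.
by rewrite ltnS (cardsD1 x R) xR.
Qed.

Lemma nedgesE R : (2 * nedges m R)%N = CC R R.
Proof.
rewrite /nedges -/(CC R R) mul2n.
have := odd_double_half (CC R R); have := W_even R.
by case: odd.
Qed.

End Comb.
Section Rat.
Variables (T : finType) (m : T -> T -> nat).
Hypothesis msym : forall u v, m u v = m v u.
Hypothesis m0 : forall v, m v v = 0%N.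
Local Open Scope ring_scope.

Lemma tvalE (R : {set T}) : Defs.tval m R = (CC m R R)%:R / (#|R|.-1)%:R.
Proof. by rewrite /Defs.tval nedgesE. Qed.

Lemma tval_le (R : {set T}) c : (1 < #|R|)%N ->
  (Defs.tval m R <= c%:R) = (CC m R R <= c * #|R|.-1)%N.
Proof.
move=> h; rewrite tvalE ler_pdivrMr; last by rewrite ltr0n; lia.
by rewrite -natrM ler_nat.
Qed.

Lemma overfullE (R : {set T}) k : (1 < #|R|)%N ->
  overfull m R k = (k * #|R|.-1 < CC m R R)%N.
Proof.
move=> h; rewrite /overfull tvalE ltr_pdivlMr; last by rewrite ltr0n; lia.
by rewrite -natrM ltr_nat.
Qed.

Lemma slack_leE (S R : {set T}) k : slack m S k <= slack m R k ->
  (k.+1 * #|S|.-1 + CC m R R <= k.+1 * #|R|.-1 + CC m S S)%N.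
Proof.
rewrite /slack => h.
have hS := nedgesE msym m0 S; have hR := nedgesE msym m0 R.
rewrite -(ler_nat rat) -hS -hR !natrD !natrM.
move: h; set a := (k.+1 * #|S|.-1)%:R; set b := (k.+1 * #|R|.-1)%:R.
set x := (nedges m S)%:R; set y := (nedges m R)%:R.
rewrite -!natrM -/a -/b -/x -/y => h.
lra.
Qed.

Lemma tval_le_Gamma (V R : {set T}) : odd_sub V R -> Defs.tval m R <= Gamma V m.
Proof.
move=> h; rewrite /Gamma (bigD1 R) //=.
by rewrite le_max lexx.
Qed.

Lemma Gamma_le (V : {set T}) c : (0 <= c) -> (forall R, odd_sub V R -> Defs.tval m R <= c) ->
  Gamma V m <= c.
Proof.
move=> c0 h; rewrite /Gamma; elim/big_ind: _ => //.
  by move=> x y hx hy; rewrite ge_max hx hy.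
Qed.
End Rat.
Section Shrink.
Variables (T : finType) (m : T -> T -> nat).
Hypothesis msym : forall u v, m u v = m v u.
Hypothesis m0 : forall v, m v v = 0%N.

Lemma sum_Some (F : option T -> nat) (A : {set T}) :
  (\sum_(j in Some @: A) F j = \sum_(i in A) F (Some i))%N.
Proof. by rewrite big_imset //; move=> x y _ _ []. Qed.

Lemma None_notin (A : {set T}) : None \notin Some @: A.
Proof. by apply/imsetP => -[]. Qed.

Lemma card_Some (A : {set T}) : #|Some @: A| = #|A|.
Proof. by rewrite card_imset //; move=> x y []. Qed.

Lemma card_NSome (A : {set T}) : #|None |: Some @: A| = #|A|.+1.
Proof. by rewrite cardsU1 None_notin card_Some. Qed.

Variable S : {set T}.

Lemma shsym : forall a b, shrinkm m S a b = shrinkm m S b a.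
Proof. by case=> [u|] [v|] //=. Qed.

Lemma sh0 : forall a, shrinkm m S a a = 0%N.
Proof. by case=> [u|] //=. Qed.

Lemma W_Some (A : {set T}) : CC (shrinkm m S) (Some @: A) (Some @: A) = CC m A A.
Proof.
rewrite /CC sum_Some; apply: eq_bigr => i _; by rewrite sum_Some.
Qed.

Lemma W_NSome (A : {set T}) :
  CC (shrinkm m S) (None |: Some @: A) (None |: Some @: A) = (CC m A A + 2 * CC m A S)%N.
Proof.
rewrite /CC big_setU1 ?None_notin //= big_setU1 ?None_notin //= sum_Some.
rewrite sum_Some.
have -> : (\sum_(i in A) \sum_(j in None |: [set Some x | x in A]) shrinkm m S (Some i) j =
   \sum_(i in A) ((\sum_(x in S) m i x) + \sum_(j in A) m i j))%N.
  apply: eq_bigr => i _; rewrite big_setU1 ?None_notin //= sum_Some //.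
rewrite big_split /=; lia.
Qed.

Variable V : {set T}.
Hypothesis SV : S \subset V.

Lemma deg_Some u : deg (shrinkV V S) (shrinkm m S) (Some u) = deg V m u.
Proof.
rewrite /deg /shrinkV big_setU1 ?None_notin //= sum_Some /=.
rewrite [in RHS](big_setID S) /= (setIidPr SV) //.
Qed.

Lemma deg_None : deg (shrinkV V S) (shrinkm m S) None = CC m (V :\: S) S.
Proof.
by rewrite /deg /shrinkV big_setU1 ?None_notin //= sum_Some.
Qed.

Lemma shrink_decomp (R : {set option T}) : R \subset shrinkV V S ->
  [set x | Some x \in R] \subset V :\: S /\
  R = if None \in R then None |: Some @: [set x | Some x \in R]
      else Some @: [set x | Some x \in R].
Proof.
move=> /subsetP h; split.
  apply/subsetP => x; rewrite inE => /h; rewrite /shrinkV !inE.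
  by case/orP => [//|/imsetP [y yV [->]]]; rewrite inE in yV.
apply/setP => -[x|]; case: ifP => hN; rewrite ?inE.
- by rewrite (mem_imset _ _ Some_inj) inE.
- by rewrite (mem_imset _ _ Some_inj) inE.
- by rewrite eqxx.
- by rewrite (negbTE (None_notin _)).
Qed.

Lemma side d r : maxdeg_le V m d.+1 -> num_deg V m d.+1 = r ->
  (CC m (V :\: S) S <= d)%N ->
  (forall R0 : {set T}, R0 \subset V :\: S -> odd #|R0| -> (3 <= #|R0|)%N ->
      (CC m R0 R0 <= d.+2 * #|R0|.-1)%N) ->
  (forall R0 : {set T}, R0 \subset V :\: S -> ~~ odd #|R0| -> (0 < #|R0|)%N ->
      (CC m R0 R0 + 2 * CC m R0 S <= d.+2 * #|R0|)%N) ->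
  [/\ maxdeg_le (shrinkV V S) (shrinkm m S) d.+1,
      (Gamma (shrinkV V S) (shrinkm m S) <= d.+2%:R)%R &
      (num_deg (shrinkV V S) (shrinkm m S) d.+1 <= r)%N].
Proof.
move=> hdeg hr hC hG1 hG2; split.
- move=> [u|] hu; last by rewrite deg_None; lia.
  rewrite deg_Some; apply: hdeg.
  by move: hu; rewrite /shrinkV !inE => /imsetP [y]; rewrite inE => /andP [_ yV] [->].
- apply: Gamma_le; first by rewrite ler0n.
  move=> R /and3P [RV oR R3].
  have [R0V eR] := shrink_decomp RV.
  rewrite tval_le //; [|exact: shsym|exact: sh0|lia].
  move: eR oR R3; case: ifP => _ -> .
  + rewrite card_NSome W_NSome /= => oR R3.
    by apply: hG2 => //; lia.
  + rewrite card_Some W_Some => oR R3; exact: hG1.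
- rewrite -hr /num_deg.
  have -> : #|[set v in V | deg V m v == d.+1]| =
     #|Some @: [set v in V | deg V m v == d.+1]| by rewrite card_Some.
  apply: subset_leq_card; apply/subsetP => -[u|]; rewrite !inE.
  + case/andP => /orP [//|/imsetP [y]]; rewrite inE => /andP [_ yV] [->].
    rewrite deg_Some => hd.
    by rewrite (mem_imset _ _ Some_inj) inE yV hd.
  + by rewrite deg_None => /andP [_ /eqP]; lia.
Qed.
End Shrink.
Theorem mainTheorem6 (T : finType) (V : {set T}) (m : T -> T -> nat)
  (d r : nat) (S : {set T}) :
  is_multigraph m ->
  ~~ odd #|V| ->
  maxdeg_le V m d.+1 ->
  num_deg V m d.+1 = r ->
  (d.+1%:R < Gamma V m)%R ->
  (Gamma V m <= d.+2%:R)%R ->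
  odd_sub V S ->
  overfull m S d.+1 ->
  (forall R : {set T}, odd_sub V R -> overfull m R d.+1 ->
     (slack m S d.+1 <= slack m R d.+1)%R) ->
  [/\ maxdeg_le (shrinkV V S) (shrinkm m S) d.+1,
      (Gamma (shrinkV V S) (shrinkm m S) <= d.+2%:R)%R &
      (num_deg (shrinkV V S) (shrinkm m S) d.+1 <= r)%N] /\
  [/\ maxdeg_le (shrinkV V (V :\: S)) (shrinkm m (V :\: S)) d.+1,
      (Gamma (shrinkV V (V :\: S)) (shrinkm m (V :\: S)) <= d.+2%:R)%R &
      (num_deg (shrinkV V (V :\: S)) (shrinkm m (V :\: S)) d.+1 <= r)%N].
Proof.
have dD : forall A B : {set T}, [disjoint A & B :\: A].
  move=> A B; rewrite -setI_eq0; apply/eqP/setP=> x; rewrite !inE.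
  by case: (x \in A); rewrite ?andbF.
have eU : forall A B : {set T}, A \subset B -> A :|: (B :\: A) = B.
  by move=> A B AB; rewrite -{2}(setID B A) (setIidPr AB).
move=> [msym m0] _ hdeg hr _ hGam hS hovS hmin.
have /and3P [SV oS S3] := hS.
have hOS : (d.+1 * #|S|.-1 < CC m S S)%N by rewrite -overfullE //; lia.
have degA : forall A : {set T}, A \subset V -> (CC m A V <= d.+1 * #|A|)%N.
  move=> A AV; rewrite /CC mulnC -sum_nat_const; apply: leq_sum => v vA.
  exact: hdeg (subsetP AV v vA).
have splitV : forall A : {set T}, A \subset V ->
    CC m A V = (CC m A A + CC m A (V :\: A))%N.
  by move=> A AV; rewrite -CC_U2 ?eU.
have hG1 : forall R0 : {set T}, R0 \subset V -> odd #|R0| -> (3 <= #|R0|)%N ->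
    (CC m R0 R0 <= d.+2 * #|R0|.-1)%N.
  move=> R0 R0V o3 h3; rewrite -(tval_le msym m0) //; last by lia.
  apply: le_trans hGam; apply: tval_le_Gamma; exact/and3P.
have hminN : forall R : {set T}, odd_sub V R -> (d.+1 * #|R|.-1 < CC m R R)%N ->
    (d.+2 * #|S|.-1 + CC m R R <= d.+2 * #|R|.-1 + CC m S S)%N.
  move=> R hR hov; apply: (slack_leE msym m0); apply: hmin => //.
  have /and3P [_ _ ?] := hR; rewrite overfullE //; lia.
have hCS : (CC m S (V :\: S) <= d)%N.
  have := degA S SV; rewrite splitV //; nia.
split.
- apply: side => //.
  + by rewrite CC_sym.
  + by move=> R0 /subsetP h; apply: hG1; apply/subsetP => x /h; rewrite inE => /andP [].
  move=> R0 R0VS eR0 R0p; rewrite leqNgt; apply/negP => hbig.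
  have dSR : [disjoint S & R0].
    rewrite disjoint_sym disjoint_subset; apply: subset_trans R0VS _.
    by apply/subsetP => x; rewrite !inE => /andP [].
  have cR : #|S :|: R0| = (#|S| + #|R0|)%N.
    by rewrite cardsU (disjoint_setI0 dSR) cards0 subn0.
  have hR : odd_sub V (S :|: R0).
    rewrite /odd_sub subUset SV (subset_trans R0VS (subsetDl _ _)) cR oddD oS /=.
    by rewrite (negbTE eR0) /=; lia.
  have := hminN _ hR; rewrite WU // cR (CC_sym msym S R0).
  move=> h; have {h} := h ltac:(nia); nia.
- have eS : V :\: (V :\: S) = S.
    apply/setP => x; rewrite !inE.
    case: (boolP (x \in S)) => xS; case: (boolP (x \in V)) => xV //=.
    by rewrite (subsetP SV x xS) in xV.
  apply: side => //; rewrite ?eS.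
  + exact: subsetDl.
  + done.
  + by move=> R0 R0S; apply: hG1; exact: subset_trans R0S SV.
  move=> R0 R0S eR0 R0p; rewrite leqNgt; apply/negP => hbig.
  set Q := S :\: R0.
  have dRQ : [disjoint R0 & Q] by exact: dD.
  have eSQ : S = R0 :|: Q by rewrite eU.
  have cQ : #|Q| = (#|S| - #|R0|)%N.
    by rewrite cardsD (setIidPr R0S).
  have cSQ : #|S| = (#|R0| + #|Q|)%N.
    by rewrite {1}eSQ cardsU (disjoint_setI0 dRQ) cards0 subn0.
  have WS : CC m S S = (CC m R0 R0 + CC m Q Q + 2 * CC m R0 Q)%N by rewrite {1 2}eSQ WU.
  have R0V : R0 \subset V := subset_trans R0S SV.
  have hdR := degA R0 R0V.
  have eV : V :\: R0 = Q :|: (V :\: S).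
    apply/setP => x; rewrite !inE; case: (boolP (x \in R0)) => xR /=.
      by rewrite (subsetP R0S x xR).
    by case: (boolP (x \in S)) => xS //=; rewrite (subsetP SV x xS).
  have dQ : [disjoint Q & V :\: S].
    rewrite disjoint_subset; apply/subsetP => x; rewrite !inE.
    by case/andP => _ ->.
  rewrite splitV // eV CC_U2 // in hdR.
  have oQ : odd #|Q| by move: oS; rewrite cSQ oddD (negbTE eR0).
  case: (ltnP #|Q| 3) => hQ3.
    have /cards1P [x eQ] : #|Q| == 1%N by apply/eqP; move: oQ; case: #|Q| hQ3 => [|[|[|]]].
    have WQ : CC m Q Q = 0%N by rewrite eQ W1.
    have cQ1 : #|Q| = 1%N by rewrite eQ cards1.
    nia.
  have hQ : odd_sub V Q by rewrite /odd_sub oQ hQ3 (subset_trans (subsetDl _ _) SV).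
  have := hminN _ hQ; rewrite cQ => h; have {h} := h ltac:(nia); nia.
Qed.
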